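(* Let $n$ be even, $k\le n/2$, let ${\mathbf{H}}$ be chosen uniformly at random in $\mathbb{F}_3^{(n/2-k)\times n/2}$, and let $d\in\{1,\dots,k\}$. Set $R=k/(n/2)$, $\delta=d/(n/2)$, and $$\gamma=\min_{x>0}\Big((1-R+\delta)\log_3\frac{1+3x}{x}+(R-\delta)\log_3(1+x)\Big)-1+R.$$ Call a subset ${\mathcal E}\subseteq\{1,\dots,n/2\}$ of size $k-d$ good for ${\mathbf{H}}$ if the submatrix of ${\mathbf{H}}$ formed by the columns indexed by the complement of ${\mathcal E}$ has full rank $n/2-k$. Let ${\mathcal J}^{\mathrm{unif}}$ be uniformly distributed over the subsets of $\{1,\dots,n/2\}$ of size $k-d$ and ${\mathcal J}_{{\mathbf{H}}}$ uniformly distributed over those subsets of size $k-d$ that are good for ${\mathbf{H}}$. Then $$\mathbb{P}_{{\mathbf{H}}}\Big(\rho({\mathcal J}^{\mathrm{unif}},{\mathcal J}_{{\mathbf{H}}})>\frac{1}{3^d}\Big)\le\frac{2}{\binom{n/2}{k-d}}\big(3^d+2\cdot3^{2d+\gamma n/2}\big).$$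
   Context: $\rho$ denotes the statistical distance between two distributions on the same finite set: $\rho({\mathcal D}_0,{\mathcal D}_1)=\frac12\sum_x|{\mathcal D}_0(x)-{\mathcal D}_1(x)|$. *)

(* Defs.v *)
From HB Require Import structures.
From mathcomp Require Import all_boot all_order all_algebra.
From mathcomp Require Import all_classical all_reals all_analysis.
Set Implicit Arguments. Unset Strict Implicit. Unset Printing Implicit Defensive.
Import Order.TTheory GRing.Theory Num.Theory.
Local Open Scope ring_scope.

(* Parity-check-like matrices: r rows (r = n/2 - k), m columns (m = n/2), over F_3. *)

Definition compl_cols (r m : nat) (H : 'M['F_3]_(r, m)) (E : {set 'I_m}) :
    'M['F_3]_(r, #|~: E|) :=
  colsub (enum_val : 'I_#|~: E| -> 'I_m) H.

Definition good (r m : nat) (H : 'M['F_3]_(r, m)) (E : {set 'I_m}) : bool :=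
  \rank (compl_cols H E) == r.

Definition unif_dist (R : realType) (m s : nat) (E : {set 'I_m}) : R :=
  if #|E| == s then ('C(m, s))%:R^-1 else 0.

(* Uniform distribution on the subsets of size s that are good for H.
   (If there is no good subset, this is the zero function.) *)
Definition good_dist (R : realType) (r m s : nat) (H : 'M['F_3]_(r, m))
    (E : {set 'I_m}) : R :=
  if (#|E| == s) && good H E
  then (#|[set E' : {set 'I_m} | (#|E'| == s) && good H E']|)%:R^-1 else 0.

Definition sdist (R : realType) (m : nat) (D0 D1 : {set 'I_m} -> R) : R :=
  2^-1 * \sum_(E : {set 'I_m}) `|D0 E - D1 E|.

Definition probH (R : realType) (r m : nat) (P : pred 'M['F_3]_(r, m)) : R :=
  (#|[set H : 'M['F_3]_(r, m) | P H]|)%:R / (#|{: 'M['F_3]_(r, m)}|)%:R.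

Definition log3 (R : realType) (x : R) : R := ln x / ln 3.

Definition gamma_exp (R : realType) (Rt del : R) : R :=
  inf [set y : R | exists2 x : R, 0 < x &
        y = (1 - Rt + del) * log3 ((1 + 3 * x) / x) + (Rt - del) * log3 (1 + x)]
  - 1 + Rt.

(* Main.v *)
Require Import Defs.
From HB Require Import structures.
From mathcomp Require Import all_boot all_order all_algebra.
From mathcomp Require Import all_classical all_reals all_analysis.
From mathcomp Require Import ring lra zify.
Import Order.TTheory GRing.Theory Num.Theory.
Local Open Scope ring_scope.

Lemma card_F3 : #|'F_3| = 3%N.
Proof. by rewrite card_Fp. Qed.

Lemma card_cV r : #|{: 'cV['F_3]_r}| = (3 ^ r)%N.
Proof. by rewrite card_mx card_F3 muln1. Qed.

Lemma card_ker t r (A : 'M['F_3]_(t,r)) : \rank A = t ->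
  muln #|[set v : 'cV['F_3]_r | A *m v == 0]| (expn 3 t) = expn 3 r.
Proof.
move=> rkA.
set K := [set v : 'cV['F_3]_r | A *m v == 0].
have surj (w : 'cV_t) : exists v : 'cV_r, A *m v = w.
  have: (w^T <= A^T)%MS by rewrite submx_full // /row_full mxrank_tr rkA.
  move/mulmxKpV => e; exists (w^T *m pinvmx A^T)^T.
  by apply: (can_inj (@trmxK _ _ _)); rewrite trmx_mul trmxK.
have fib (w : 'cV_t) : #|[set v : 'cV_r | A *m v == w]| = #|K|.
  case: (surj w) => v0 e.
  have -> : [set v : 'cV_r | A *m v == w] = [set u + v0 | u in K].
    apply/setP => v; rewrite inE; apply/eqP/imsetP => [Hv|[u]].
      exists (v - v0); last by rewrite subrK.
      by rewrite inE mulmxBr Hv e subrr.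
    by rewrite inE => /eqP Hu ->; rewrite mulmxDr Hu e add0r.
  exact: card_imset (addIr v0).
have -> : expn 3 r = \sum_(v : 'cV['F_3]_r) 1 by rewrite -card_cV -sum1_card.
rewrite (partition_big (fun v => A *m v) xpredT) //=.
rewrite (eq_bigr (fun _ => #|K|)); last first.
  move=> w _; rewrite -(fib w) -sum1_card.
  by apply: eq_bigl => v; rewrite !inE.
by rewrite sum_nat_const card_cV mulnC.
Qed.

Section Ind.
Variable R : realType.

Lemma sum_natb (T : finType) (P : pred T) :
  \sum_(x : T) ((P x)%:R : R) = (#|[set x | P x]|)%:R.
Proof.
rewrite -sum1_card natr_sum [RHS]big_mkcond /=.
by apply: eq_bigr => x _; rewrite inE; case: (P x).
Qed.

Definition ind {r} (y : 'rV['F_3]_r) (v : 'cV['F_3]_r) : R := (y *m v == 0)%:R.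

Lemma card_kerR t r (A : 'M['F_3]_(t,r)) : \rank A = t ->
  (#|[set v : 'cV['F_3]_r | A *m v == 0]|)%:R = (3 : R) ^+ r / 3 ^+ t.
Proof.
move=> /card_ker e; apply: (canRL (mulfK _)); first by rewrite expf_neq0 // pnatr_eq0.
by rewrite -natrX -natrM e natrX.
Qed.

Lemma sum_ind1 r (y : 'rV['F_3]_r) : y != 0 -> \sum_v ind y v = (3 : R) ^+ r / 3.
Proof.
move=> y0; rewrite /ind sum_natb card_kerR ?expr1 //.
by rewrite rank_rV y0.
Qed.

Lemma rank2 r (y y' : 'rV['F_3]_r) : y != 0 -> ~~ (y' <= y)%MS ->
  \rank (col_mx y y') = 2%N.
Proof.
move=> y0 ny'.
have le2 : (\rank (col_mx y y') <= 2)%N by apply: rank_leq_row.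
have lt : (y < y + y')%MS.
  rewrite ltmxE addsmxSl /=; apply: contra ny' => h.
  exact: submx_trans (addsmxSr _ _) h.
have := lt; rewrite ltmxErank => /andP [_].
rewrite rank_rV y0 (addsmxE y y').
by case: (\rank _) le2 => [|[|[|]]].
Qed.

Lemma sum_ind2 r (y y' : 'rV['F_3]_r) : y != 0 -> ~~ (y' <= y)%MS ->
  \sum_v ind y v * ind y' v = (3 : R) ^+ r / 3 ^+ 2.
Proof.
move=> y0 ny'; rewrite -(@card_kerR _ _ _ (rank2 _ _ _ y0 ny')) -sum_natb.
apply: eq_bigr => v _; rewrite /ind mul_col_mx col_mx_eq0.
by case: (y *m v == 0); case: (y' *m v == 0); rewrite ?mulr1 ?mulr0 ?mul0r.
Qed.

Lemma ind_dep r (y y' : 'rV['F_3]_r) v : y' != 0 -> (y' <= y)%MS -> ind y' v = ind y v.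
Proof.
move=> y'0 /sub_rVP [a ya]; rewrite /ind ya -scalemxAl scaler_eq0.
have : a != 0 by apply: contraNneq y'0 => a0; rewrite ya a0 scale0r.
by move/negbTE => ->.
Qed.

End Ind.

Lemma sum_prod_cols (R : realType) r m (g : 'I_m -> 'cV['F_3]_r -> R) :
  \sum_(H : 'M['F_3]_(r,m)) \prod_j g j (col j H) = \prod_j \sum_v g j v.
Proof.
rewrite bigA_distr_bigA /=.
rewrite (reindex (fun H : 'M['F_3]_(r,m) => [ffun j => col j H])) /=; last first.
  exists (fun f : {ffun 'I_m -> 'cV['F_3]_r} => \matrix_(i, j) (f j) i 0) => [H _ | f _].
    by apply/matrixP => i j; rewrite !mxE ffunE mxE.
  apply/ffunP => j; rewrite !ffunE; apply/matrixP => i k.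
  by rewrite !mxE (ord1 k).
by apply: eq_bigr => H _; apply: eq_bigr => j _; rewrite ffunE.
Qed.

Lemma sum_set_prod (R : realType) m (w : 'I_m -> R) :
  \sum_(A : {set 'I_m}) \prod_(j in A) w j = \prod_j (1 + w j).
Proof.
have e : \prod_j (1 + w j) = \prod_j \sum_(b : bool) (if b then w j else 1).
  by apply: eq_bigr => j _; rewrite big_bool /= addrC.
rewrite e bigA_distr_bigA /=.
rewrite (reindex (fun A : {set 'I_m} => [ffun j => j \in A])) /=; last first.
  exists (fun f : {ffun 'I_m -> bool} => [set j | f j]) => [A _ | f _].
    by apply/setP => j; rewrite inE ffunE.
  by apply/ffunP => j; rewrite !ffunE inE.
apply: eq_bigr => A _; rewrite big_mkcond /=.
by apply: eq_bigr => j _; rewrite ffunE.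
Qed.

Section XX.
Variable R : realType.
Variables r m : nat.

Definition X (A : {set 'I_m}) (y : 'rV['F_3]_r) (H : 'M['F_3]_(r,m)) : R :=
  \prod_(j in A) ind R y (col j H).

Lemma prod_if (c : R) (A : {set 'I_m}) :
  \prod_j (if j \in A then c else 1) = c ^+ #|A|.
Proof. by rewrite -big_mkcond prodr_const. Qed.

Lemma X_mkcond A y H : X A y H = \prod_j (if j \in A then ind R y (col j H) else 1).
Proof. by rewrite /X big_mkcond. Qed.

Let N : R := ((3 : R) ^+ r) ^+ m.

Lemma sum_X1 A y : y != 0 -> \sum_H X A y H = N * (3^-1) ^+ #|A|.
Proof.
move=> y0.
under eq_bigr do rewrite X_mkcond.
rewrite (@sum_prod_cols R r m (fun j v => if j \in A then ind R y v else 1)).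
rewrite (eq_bigr (fun j => 3 ^+ r * (if j \in A then 3^-1 else 1))); last first.
  move=> j _; case: (j \in A); last by rewrite sumr_const card_cV mulr1 natrX.
  by rewrite sum_ind1.
by rewrite big_split /= prod_if prodr_const card_ord.
Qed.

Lemma sum_X2_indep A A' y y' : y != 0 -> ~~ (y' <= y)%MS ->
  \sum_H X A y H * X A' y' H = N * (3^-1) ^+ #|A| * (3^-1) ^+ #|A'|.
Proof.
move=> y0 ny'.
have y'0 : y' != 0 by apply: contraNneq ny' => ->; rewrite sub0mx.
under eq_bigr do rewrite !X_mkcond -big_split /=.
rewrite (@sum_prod_cols R r m (fun j v => (if j \in A then ind R y v else 1) *
                                    (if j \in A' then ind R y' v else 1))).
rewrite (eq_bigr (fun j => 3 ^+ r * (if j \in A then 3^-1 else 1) *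
                                      (if j \in A' then 3^-1 else 1))); last first.
  move=> j _; case: (j \in A); case: (j \in A'); rewrite ?mulr1 ?mul1r.
  - by rewrite sum_ind2 // expr2 invfM mulrA.
  - by under eq_bigr do rewrite mulr1; rewrite sum_ind1.
  - by under eq_bigr do rewrite mul1r; rewrite sum_ind1.
  - by rewrite sumr_const card_cV natrX.
by rewrite !big_split /= !prod_if prodr_const card_ord.
Qed.

Lemma sum_X2_dep A A' y y' : y' != 0 -> (y' <= y)%MS ->
  \sum_H X A y H * X A' y' H = N * (3^-1) ^+ #|A :|: A'|.
Proof.
move=> y'0 sy'.
have y0 : y != 0.
  apply/eqP => e; move: sy'; rewrite e => /submx0null h; by rewrite h eqxx in y'0.
under eq_bigr do rewrite !X_mkcond -big_split /=.
rewrite (@sum_prod_cols R r m (fun j v => (if j \in A then ind R y v else 1) *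
                                    (if j \in A' then ind R y' v else 1))).
rewrite (eq_bigr (fun j => 3 ^+ r * (if j \in A :|: A' then 3^-1 else 1))); last first.
  move=> j _; rewrite inE.
  under eq_bigr do rewrite (ind_dep _ _ _ _ _ y'0 sy').
  case: (j \in A); case: (j \in A'); rewrite ?mulr1 ?mul1r /=.
  - rewrite -(sum_ind1 R _ _ y0); apply: eq_bigr => v _; rewrite /ind.
    by case: (_ == _); rewrite ?mulr1 ?mulr0.
  - by under eq_bigr do rewrite mulr1; rewrite sum_ind1.
  - by under eq_bigr do rewrite mul1r; rewrite sum_ind1.
  - by rewrite sumr_const card_cV natrX.
by rewrite !big_split /= !prod_if prodr_const card_ord.
Qed.

End XX.
Arguments X R {r m}.

Lemma X_ge0 (R : realType) r m A y (H : 'M['F_3]_(r,m)) : 0 <= X R A y H.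
Proof. by apply: prodr_ge0 => j _; rewrite /ind ler0n. Qed.

Lemma two_ne0 : (1 + 1 : 'F_3) != 0.
Proof. by []. Qed.

Lemma bad_two (R : realType) r m (H : 'M['F_3]_(r,m)) E : ~~ good H E ->
  2 <= \sum_(y in [set y : 'rV['F_3]_r | y != 0]) X R (~: E) y H.
Proof.
move=> ng.
set M := compl_cols H E.
have rk : (\rank M < r)%N by rewrite ltn_neqAle rank_leq_row andbT; exact: ng.
have kn : kermx M != 0 by rewrite -mxrank_eq0 mxrank_ker subn_eq0 -ltnNge.
set y0 := nz_row (kermx M).
have y00 : y0 != 0 by rewrite nz_row_eq0.
have hy0 : y0 *m M = 0 by apply/sub_kermxP; exact: nz_row_sub.
have Xy (y : 'rV_r) : y *m M = 0 -> X R (~:E) y H = 1.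
  move=> hy; rewrite /X big1 // => j jE; rewrite /ind.
  have : (y *m M) 0 (enum_rank_in jE j) = 0 by rewrite hy mxE.
  rewrite /M /compl_cols mulmx_colsub mxE (enum_rankK_in jE jE) => h.
  suff -> : y *m col j H = 0 by rewrite eqxx.
  apply/matrixP => a b; rewrite !mxE (ord1 a) (ord1 b) -[RHS]h !mxE.
  by apply: eq_bigr => i _; rewrite !mxE.
set y1 := - y0.
have hy1 : y1 *m M = 0 by rewrite mulNmx hy0 oppr0.
have y10 : y1 != 0 by rewrite oppr_eq0.
have y1y0 : y1 != y0.
  apply/eqP => e; move/eqP: y00; apply.
  have : (1 + 1 : 'F_3) *: y0 = 0 by rewrite scalerDl scale1r -{1}e addNr.
  by move/eqP; rewrite scaler_eq0 (negbTE two_ne0) => /eqP.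
rewrite (bigD1 y0) ?inE //= (bigD1 y1) ?inE ?y10 //= Xy // Xy //.
rewrite addrA -[2]addr0 lerD //; apply: sumr_ge0 => y _; exact: X_ge0.
Qed.

Lemma sdist_le (R : realType) r m s (H : 'M['F_3]_(r,m)) : (s <= m)%N ->
  sdist (@unif_dist R m s) (good_dist R s H) <=
  (#|[set E : {set 'I_m} | (#|E| == s) && ~~ good H E]|)%:R / ('C(m,s))%:R.
Proof.
move=> sm.
set T := 'C(m,s).
set Sg := [set E : {set 'I_m} | (#|E| == s) && good H E].
set Sb := [set E : {set 'I_m} | (#|E| == s) && ~~ good H E].
have Tpos : (0 < T)%N by rewrite bin_gt0.
have hT : (#|Sg| + #|Sb| = T)%N.
  have -> : T = #|[set E : {set 'I_m} | #|E| == s]| by rewrite card_draws card_ord.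
  rewrite -(cardsID [set E | good H E] [set E : {set 'I_m} | #|E| == s]).
  by congr (_ + _); apply: eq_card => E; rewrite !inE // andbC.
have NgT : (#|Sg| <= T)%N by rewrite -hT leq_addr.
have pw E : `|@unif_dist R m s E - good_dist R s H E| <=
    (if E \in Sg then (#|Sg|%:R^-1 - T%:R^-1) else 0) + (if E \in Sb then T%:R^-1 else 0).
  rewrite /unif_dist /good_dist -/Sg !inE.
  case Es: (#|E| == s) => /=; last by rewrite subr0 normr0 addr0.
  case g: (good H E) => /=.
  - have Ng1 : (0 < #|Sg|)%N by apply/card_gt0P; exists E; rewrite inE Es g.
    rewrite addr0 distrC ger0_norm // subr_ge0 lef_pV2 ?posrE ?ltr0n // ler_nat //.
  - by rewrite subr0 add0r ger0_norm // invr_ge0 ler0n.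
rewrite /sdist.
have e1 (S : {set {set 'I_m}}) (c : R) : \sum_(E : {set 'I_m}) (if E \in S then c else 0) = #|S|%:R * c.
  by rewrite -big_mkcond /= sumr_const mulr_natl.
have hs : \sum_E `|@unif_dist R m s E - good_dist R s H E| <=
    #|Sg|%:R * (#|Sg|%:R^-1 - T%:R^-1) + #|Sb|%:R * T%:R^-1.
  rewrite -e1 -e1 -big_split /=.
  by apply: ler_sum => E _; apply: pw.
have tE : (T%:R : R) = #|Sg|%:R + #|Sb|%:R by rewrite -natrD hT.
have t0 : (T%:R : R) != 0 by rewrite pnatr_eq0 -lt0n.
have h2 : #|Sg|%:R * (#|Sg|%:R^-1 - T%:R^-1) + #|Sb|%:R * T%:R^-1 <=
          2 * (#|Sb|%:R / (T%:R : R)).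
  case: (posnP #|Sg|) => [->|g0]; first by rewrite mul0r add0r mulr2n mulrDl mul1r lerDr divr_ge0.
  have g0' : (#|Sg|%:R : R) != 0 by rewrite pnatr_eq0 -lt0n.
  rewrite mulrBr divff //.
  have -> : 1 - #|Sg|%:R * (T%:R : R)^-1 = #|Sb|%:R / T%:R.
    by apply: (canRL (mulfK t0)); rewrite mulrBl mul1r mulfVK // tE addrAC subrr add0r.
  by rewrite mulr2n mulrDl mul1r.
apply: (@le_trans _ _ (2^-1 * (2 * (#|Sb|%:R / (T%:R : R))))).
  by rewrite ler_pM2l ?invr_gt0 //; exact: le_trans hs h2.
by rewrite mulrA mulVf // mul1r.
Qed.

Lemma card_setC' m (A : {set 'I_m}) : #|~: A| = (m - #|A|)%N.
Proof. have e := cardsC A; rewrite card_ord in e. by apply/eqP; rewrite -(eqn_add2l #|A|) e subnKC // -[X in (_ <= X)%N]e leq_addr. Qed.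

Lemma overlap (R : realType) m (A : {set 'I_m}) s (x : R) : 0 < x ->
  \sum_(E in [set E : {set 'I_m} | #|E| == s]) (3:R) ^+ #|A :&: ~: E| * x ^+ (m - s)
  <= (1 + 3 * x) ^+ #|A| * (1 + x) ^+ (m - #|A|).
Proof.
move=> x0.
pose G (B : {set 'I_m}) := (3:R) ^+ #|A :&: B| * x ^+ #|B|.
have G0 B : 0 <= G B by rewrite mulr_ge0 // exprn_ge0 // ltW.
apply: (@le_trans _ _ (\sum_E G (~: E))).
  rewrite big_mkcond /=; apply: ler_sum => E _; rewrite inE.
  case: eqP => [<-|_]; last exact: G0.
  by rewrite /G card_setC'.
have -> : \sum_E G (~: E) = \sum_B G B by rewrite [RHS](reindex_inj (@finset.setC_inj _)).
have GE B : G B = \prod_(j in B) (if j \in A then 3 * x else x).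
  rewrite /G (eq_bigr (fun j => (if j \in A then 3 else 1) * x)); last first.
    by move=> j _; case: (j \in A); rewrite ?mul1r.
  rewrite big_split /= prodr_const; congr (_ * _).
  rewrite -prodr_const [LHS]big_mkcond [RHS]big_mkcond /=; apply: eq_bigr => i _.
  by rewrite inE; case: (i \in A); case: (i \in B).
under eq_bigr do rewrite GE.
rewrite sum_set_prod (bigID (fun j => j \in A)) /=.
rewrite (eq_bigr (fun _ => 1 + 3 * x)); last by move=> j ->.
rewrite prodr_const (eq_bigr (fun _ => 1 + x)); last by move=> j /negbTE ->.
rewrite (eq_bigl (fun j => j \in ~: A)); last by move=> j; rewrite inE.
by rewrite prodr_const card_setC'.
Qed.

Lemma S_bound (R : realType) m s (A : {set 'I_m}) (Rt del : R) :
  (0 < m)%N -> (s <= m)%N -> #|A| = (m - s)%N ->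
  (1 - Rt + del) * m%:R = (m - s)%N%:R -> (Rt - del) * m%:R = s%:R ->
  \sum_(E in [set E : {set 'I_m} | #|E| == s]) (3:R) ^+ #|A :&: ~: E| <=
  3 `^ (m%:R * inf [set y : R | exists2 x : R, 0 < x &
        y = (1 - Rt + del) * log3 ((1 + 3 * x) / x) + (Rt - del) * log3 (1 + x)]).
Proof.
move=> m0 sm hA e1 e2.
set S := \sum_(E in _) _.
set L := inf _.
have ln3 : 0 < ln (3 : R) by rewrite ln_gt0 // ltr1n.
have m0' : (0 : R) < m%:R by rewrite ltr0n.
have S0 : 0 < S.
  apply: (@lt_le_trans _ _ (\sum_(E in [set E : {set 'I_m} | #|E| == s]) (1 : R))).
    by rewrite sumr_const card_draws card_ord ltr0n bin_gt0.
  by apply: ler_sum => E _; rewrite exprn_ege1 // ler1n.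
have key : ln S / ln 3 / m%:R <= L.
  apply: lb_le_inf.
    by exists ((1 - Rt + del) * log3 ((1 + 3 * 1) / 1) + (Rt - del) * log3 (1 + 1)), 1.
  move=> _ [x x0 ->].
  have hx := @overlap R m A s x x0; rewrite hA in hx.
  have pos1 : 0 < 1 + 3 * x by rewrite addr_gt0 // mulr_gt0.
  have pos2 : 0 < 1 + x by rewrite addr_gt0.
  have hS : S <= ((1 + 3 * x) / x) ^+ (m - s) * (1 + x) ^+ s.
    rewrite expr_div_n mulrAC ler_pdivlMr ?exprn_gt0 //.
    move: hx; rewrite -big_distrl /= -/S.
    by rewrite (_ : (m - (m - s))%N = s) // subKn.
  have Y0 : 0 < ((1 + 3 * x) / x) ^+ (m - s) * (1 + x) ^+ s.
    by rewrite mulr_gt0 // exprn_gt0 // divr_gt0.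
  have hl : ln S <= ln (((1 + 3 * x) / x) ^+ (m - s) * (1 + x) ^+ s).
    by rewrite ler_ln ?posrE.
  rewrite lnM ?posrE ?exprn_gt0 ?divr_gt0 // !lnXn ?divr_gt0 // in hl.
  rewrite /log3.
  have hg (P Q : R) : (1 - Rt + del) * (P / ln 3) + (Rt - del) * (Q / ln 3) =
            (P *+ (m - s) + Q *+ s) / ln 3 / m%:R.
    rewrite -[P *+ _]mulr_natr -[Q *+ _]mulr_natr -e1 -e2; field.
    by rewrite !gt_eqF.
  rewrite hg.
  apply: ler_wpM2r; first by rewrite invr_ge0 ltW.
  by apply: ler_wpM2r; first by rewrite invr_ge0 ltW.
rewrite -[X in X <= _](@lnK _ S) ?posrE // /powR.
rewrite (negbTE (_ : (3:R) != 0)) ?pnatr_eq0 // ler_expR.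
move: key; rewrite ler_pdivrMr // ler_pdivrMr // => key; apply: le_trans key _.
by rewrite [m%:R * L]mulrC.
Qed.

Section Main.
Variables (R : realType) (m k d : nat).
Hypotheses (km : (k <= m)%N) (d1 : (1 <= d)%N) (dk : (d <= k)%N).
Let r := (m - k)%N.
Let s := (k - d)%N.
Let Ss := [set E : {set 'I_m} | #|E| == s].
Let Y := [set y : 'rV['F_3]_r | y != 0].
Let N : R := ((3:R) ^+ r) ^+ m.
Let p : R := (3^-1) ^+ (r + d).
Let W E y (H : 'M['F_3]_(r,m)) : R := X R (~: E) y H - p.
Let Z (H : 'M['F_3]_(r,m)) : R := \sum_(E in Ss) \sum_(y in Y) X R (~: E) y H.
Let mu : R := \sum_(E in Ss) \sum_(y in Y) p.
Let T := 'C(m, s).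

Lemma hcE E : E \in Ss -> #|~: E| = (r + d)%N.
Proof. rewrite inE => /eqP e; rewrite card_setC' e /r /s; lia. Qed.

Lemma cardOmega : (#|{: 'M['F_3]_(r,m)}|)%:R = N :> R.
Proof. by rewrite card_mx card_F3 natrX exprM. Qed.

Lemma sum_constH (c : R) : \sum_(H : 'M['F_3]_(r,m)) c = N * c.
Proof. rewrite sumr_const -mulr_natl; congr (_ * _); rewrite -cardOmega; congr (_%:R); exact: eq_card. Qed.

Lemma sumW1 E y : E \in Ss -> y \in Y -> \sum_H X R (~:E) y H = N * p.
Proof. by move=> hE; rewrite inE => y0; rewrite sum_X1 // hcE. Qed.

Lemma pairW E y E' y' : E \in Ss -> y \in Y -> E' \in Ss -> y' \in Y ->
  \sum_H W E y H * W E' y' H =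
  \sum_H X R (~:E) y H * X R (~:E') y' H - N * p ^+ 2.
Proof.
move=> hE hy hE' hy'.
transitivity (\sum_H (X R (~:E) y H * X R (~:E') y' H - p * X R (~:E') y' H
                        - p * X R (~:E) y H + p ^+ 2)).
  by apply: eq_bigr => H _; rewrite /W; ring.
rewrite big_split /= !sumrB -!mulr_sumr sumW1 // sumW1 // sum_constH.
ring.
Qed.


Lemma pair_le E y E' y' : E \in Ss -> y \in Y -> E' \in Ss -> y' \in Y ->
  \sum_H W E y H * W E' y' H <=
  if (y' <= y)%MS then N * (3^-1) ^+ #|~:E :|: ~:E'| else 0.
Proof.
move=> hE hy hE' hy'; rewrite pairW //.
have y0 : y != 0 by move: hy; rewrite inE.
have y'0 : y' != 0 by move: hy'; rewrite inE.
case: ifP => dep.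
  by rewrite sum_X2_dep // lerBlDr lerDl mulr_ge0 // ?exprn_ge0 // /N !exprn_ge0.

by rewrite sum_X2_indep ?dep // !hcE // -/p expr2 mulrA subrr.
Qed.

Lemma card_nz : #|[set a : 'F_3 | a != 0]| = 2%N.
Proof.
have -> : [set a : 'F_3 | a != 0] = [set~ 0] by apply/setP => a; rewrite !inE.
by rewrite cardsC1 card_F3.
Qed.

Lemma count_dep (y : 'rV['F_3]_r) : (#|[set y' in Y | (y' <= y)%MS]| <= 2)%N.
Proof.
apply: (@leq_trans #|[set a : 'F_3 | a != 0]|); last by rewrite card_nz.
apply: (leq_trans _ (leq_imset_card (fun a : 'F_3 => a *: y) _)).
apply: subset_leq_card; apply/fintype.subsetP => y'; rewrite !inE => /andP [y'0 /sub_rVP [a ya]].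
apply/imsetP; exists a => //; rewrite inE.
by apply: contraNneq y'0 => a0; rewrite ya a0 scale0r.
Qed.

Lemma sum_dep (y : 'rV['F_3]_r) (c : R) : 0 <= c ->
  \sum_(y' in Y) (if (y' <= y)%MS then c else 0) <= 2 * c.
Proof.
move=> c0; rewrite -big_mkcondr /=.
rewrite (eq_bigl (fun y' => y' \in [set y' in Y | (y' <= y)%MS])); last first.
  by move=> y'; rewrite !inE.
rewrite sumr_const -[c *+ _]mulr_natl; apply: ler_wpM2r => //; rewrite ler_nat.
exact: count_dep.
Qed.

Lemma cardY : (#|Y| <= 3 ^ r)%N.
Proof.
apply: (leq_trans (max_card _)).
by rewrite card_mx card_F3 mul1n.
Qed.

Lemma mu_le : mu <= T%:R * (3^-1) ^+ d.
Proof.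
have -> : mu = T%:R * (#|Y|%:R * p).
  rewrite /mu (eq_bigr (fun _ => p *+ #|Y|)); last by move=> E _; rewrite sumr_const.
  by rewrite sumr_const card_draws card_ord -/s -/T -[_ *+ T]mulr_natl -[p *+ _]mulr_natl.
apply: ler_wpM2l => //.
apply: (@le_trans _ _ ((3 : R) ^+ r * p)).
  apply: ler_wpM2r; first by rewrite /p exprn_ge0 // invr_ge0.
  by rewrite -natrX ler_nat; exact: cardY.
rewrite /p exprD mulrA exprVn mulfV ?mul1r ?expf_neq0 //.
Qed.

Lemma Zge (H : 'M['F_3]_(r,m)) :
  2 * (#|[set E : {set 'I_m} | (#|E| == s) && ~~ good H E]|)%:R <= Z H.
Proof.
rewrite /Z.
apply: (@le_trans _ _ (\sum_(E in Ss) (if E \in [set E : {set 'I_m} | (#|E| == s) && ~~ good H E] then 2 else 0))).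
  rewrite -big_mkcondr /=.
  rewrite (eq_bigl (fun E => E \in [set E : {set 'I_m} | (#|E| == s) && ~~ good H E])); last first.
    by move=> E; rewrite !inE; case: (#|E| == s).
  by rewrite sumr_const mulrC mulr_natl.
apply: ler_sum => E _; case: ifP => [|_].
  by rewrite inE => /andP [_ bad]; exact: bad_two.
by apply: sumr_ge0 => y _; exact: X_ge0.
Qed.

Lemma var_eq : \sum_H (Z H - mu) ^+ 2 =
  \sum_(E in Ss) \sum_(y in Y) \sum_(E' in Ss) \sum_(y' in Y) \sum_H W E y H * W E' y' H.
Proof.
have hZ H : Z H - mu = \sum_(E in Ss) \sum_(y in Y) W E y H.
  by rewrite /Z /mu -sumrB; apply: eq_bigr => E _; rewrite -sumrB.
transitivity (\sum_H \sum_(E in Ss) \sum_(y in Y) \sum_(E' in Ss) \sum_(y' in Y) W E y H * W E' y' H).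
  apply: eq_bigr => H _; rewrite hZ expr2 big_distrl /=; apply: eq_bigr => E _.
  rewrite big_distrl /=; apply: eq_bigr => y _; rewrite big_distrr /=.
  by apply: eq_bigr => E' _; rewrite big_distrr.
rewrite exchange_big; apply: eq_bigr => E _; rewrite exchange_big; apply: eq_bigr => y _.
by rewrite exchange_big; apply: eq_bigr => E' _; rewrite exchange_big.
Qed.

Let Linf := inf [set y : R | exists2 x : R, 0 < x &
        y = (1 - k%:R / m%:R + d%:R / m%:R) * log3 ((1 + 3 * x) / x) +
            (k%:R / m%:R - d%:R / m%:R) * log3 (1 + x)].
Let P := (3 : R) `^ (m%:R * Linf).

Lemma sum_E' E : E \in Ss ->
  \sum_(E' in Ss) (3^-1 : R) ^+ #|~:E :|: ~:E'| <= (3^-1) ^+ ((r + d) + (r + d)) * P.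
Proof.
move=> hE.
have eq E' : E' \in Ss -> (3^-1 : R) ^+ #|~:E :|: ~:E'| =
    (3^-1) ^+ ((r + d) + (r + d)) * 3 ^+ #|~:E :&: ~:E'|.
  move=> hE'; have c := cardsUI (~:E) (~:E'); rewrite (hcE _ hE) (hcE _ hE') in c.
  by rewrite -c exprD -mulrA !exprVn mulVf ?mulr1 // expf_neq0.
rewrite (eq_bigr _ eq) -mulr_sumr ler_wpM2l ?exprn_ge0 ?invr_ge0 //.
have m0 : (0 < m)%N by lia.
have mR : (m%:R : R) != 0 by rewrite pnatr_eq0; lia.
apply: (@S_bound R m s (~: E) (k%:R / m%:R) (d%:R / m%:R) m0).
- rewrite /s; lia.
- by rewrite card_setC'; move: hE; rewrite inE => /eqP ->.
- have -> : (m - s)%N = (m - k + d)%N by rewrite /s; lia.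
  by rewrite natrD natrB //; field.
- by rewrite /s natrB //; field.
Qed.

Lemma var_bound : \sum_H (Z H - mu) ^+ 2 <=
  T%:R * (3 ^+ r * (2 * (N * ((3^-1) ^+ ((r + d) + (r + d)) * P)))).
Proof.
rewrite var_eq.
set B := 2 * (N * _).
have N0 : 0 <= N by rewrite /N !exprn_ge0.
have B0 : 0 <= B by rewrite /B mulr_ge0 // mulr_ge0 // mulr_ge0 ?exprn_ge0 ?invr_ge0 // powR_ge0.
have step E y : E \in Ss -> y \in Y ->
    \sum_(E' in Ss) \sum_(y' in Y) \sum_H W E y H * W E' y' H <= B.
  move=> hE hy.
  apply: (@le_trans _ _ (\sum_(E' in Ss) (2 * (N * (3^-1) ^+ #|~:E :|: ~:E'|)))).
    apply: ler_sum => E' hE'.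
    apply: (@le_trans _ _ (\sum_(y' in Y) (if (y' <= y)%MS then N * (3^-1) ^+ #|~:E :|: ~:E'| else 0))).
      by apply: ler_sum => y' hy'; apply: pair_le.
    by apply: sum_dep; rewrite mulr_ge0 // exprn_ge0 // invr_ge0.
  rewrite -mulr_sumr -mulr_sumr /B; apply: ler_wpM2l => //; apply: ler_wpM2l => //.
  exact: sum_E'.
apply: (@le_trans _ _ (\sum_(E in Ss) (3 ^+ r * B))).
  apply: ler_sum => E hE.
  apply: (@le_trans _ _ (\sum_(y in Y) B)); first by apply: ler_sum => y hy; apply: step.
  rewrite sumr_const -[B *+ _]mulr_natl; apply: ler_wpM2r => //.
  by rewrite -natrX ler_nat; exact: cardY.
rewrite sumr_const card_draws card_ord -/s -/T -[_ *+ T]mulr_natl // lexx.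
Qed.

Lemma cheb :
  (#|[set H : 'M['F_3]_(r,m) | sdist (@unif_dist R m s) (good_dist R s H) > ((3 : R) ^+ d)^-1]|)%:R
    * (T%:R * (3^-1) ^+ d) ^+ 2 <= \sum_H (Z H - mu) ^+ 2.
Proof.
set c := T%:R * (3^-1) ^+ d.
have c0 : 0 <= c by rewrite /c mulr_ge0 // exprn_ge0 // invr_ge0.
have T0 : (0 : R) < T%:R by rewrite ltr0n bin_gt0 /s; lia.
have hev H : sdist (@unif_dist R m s) (good_dist R s H) > ((3 : R) ^+ d)^-1 -> c <= Z H - mu.
  move=> e.
  have sm : (s <= m)%N by rewrite /s; lia.
  have h1 := lt_le_trans e (sdist_le R r m s H sm).
  rewrite ltr_pdivlMr // in h1.
  have h2 := Zge H.
  have h3 := mu_le.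
  rewrite -/c /c exprVn in h3 *.
  rewrite mulrC in h1.
  lra.
apply: (@le_trans _ _ (\sum_(H : 'M['F_3]_(r,m)) (((sdist (@unif_dist R m s) (good_dist R s H) > ((3 : R) ^+ d)^-1)%R)%:R * c ^+ 2))).
  have hsum := sum_natb R _ (fun H : 'M['F_3]_(r,m) => (sdist (@unif_dist R m s) (good_dist R s H) > ((3 : R) ^+ d)^-1)%R).
  by rewrite -hsum big_distrl.
apply: ler_sum => H _.
case: (boolP (((3 : R) ^+ d)^-1 < sdist (@unif_dist R m s) (good_dist R s H))%R) => e /=.
  rewrite mul1r expr2 expr2; have h := hev H e; exact: (ler_pM c0 c0 h h).
by rewrite mul0r sqr_ge0.
Qed.

Theorem main_gen :
  @probH R _ _ (fun H : 'M['F_3]_(m - k, m) =>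
           sdist (@unif_dist R m (k - d)) (good_dist R (k - d) H)
             > ((3 : R) ^+ d)^-1)
  <= 2 / ('C(m, k - d))%:R *
     ((3 : R) ^+ d + 2 * (3 : R) `^ (2 * d%:R +
        gamma_exp (k%:R / m%:R) (d%:R / m%:R) * m%:R)).
Proof.
have m0 : (0 < m)%N by lia.
have mR : (m%:R : R) != 0 by rewrite pnatr_eq0; lia.
have T0 : (0 : R) < T%:R by rewrite ltr0n bin_gt0 /s; lia.
have a0 : (0 : R) < 3 ^+ r by rewrite exprn_gt0.
have b1 : (1 : R) <= 3 ^+ d by rewrite exprn_ege1 // ler1n.
have P0 : 0 <= P by exact: powR_ge0.
have eg : (3 : R) `^ (2 * d%:R + gamma_exp (k%:R / m%:R) (d%:R / m%:R) * m%:R)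
          = P * (3 ^+ d * 3 ^+ d) / 3 ^+ r.
  rewrite /gamma_exp -/Linf.
  have -> : 2 * d%:R + (Linf - 1 + k%:R / m%:R) * m%:R =
            m%:R * Linf + ((d + d)%N%:R - r%:R).
    by rewrite /r natrB // natrD; field.
  rewrite powRD ?pnatr_eq0 ?implybT // powRB ?pnatr_eq0 ?implybT //.
  by rewrite !powR_mulrn // exprD mulrA.
rewrite eg /probH.
set ev := #|_|%:R.
have hc := cheb; have hv := var_bound.
rewrite -/ev in hc.
rewrite cardOmega.
set c := T%:R * _ in hc.
set V := T%:R * _ in hv.
have c0 : 0 < c by rewrite /c mulr_gt0 // exprn_gt0 // invr_gt0.
have N0 : 0 < N by rewrite /N !exprn_gt0.
apply: (@le_trans _ _ (V / c ^+ 2 / N)).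
  apply: ler_wpM2r; first by rewrite invr_ge0 ltW.
  by rewrite ler_pdivlMr ?exprn_gt0 //; exact: le_trans hc hv.
have -> : V / c ^+ 2 / N = 2 / T%:R * (P / 3 ^+ r).
  rewrite /V /c !exprD !exprVn; field.
  by rewrite !expf_neq0 ?gt_eqF.
rewrite ler_wpM2l ?divr_ge0 //.
have w0 : 0 <= P / 3 ^+ r by rewrite divr_ge0 // ltW.
have -> : P * (3 ^+ d * 3 ^+ d) / 3 ^+ r = P / 3 ^+ r * (3 ^+ d * 3 ^+ d) by rewrite mulrAC.
set w := P / 3 ^+ r in w0 *.
set b := (3 : R) ^+ d in b1 *.
have := mulr_ge0 w0 (_ : 0 <= b * b - 1).
nra.
Qed.
End Main.

Theorem lemma7 (R : realType) (n k d : nat) :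
  ~~ odd n -> (k <= n./2)%N -> (1 <= d)%N -> (d <= k)%N ->
  @probH R _ _ (fun H : 'M['F_3]_(n./2 - k, n./2) =>
           sdist (@unif_dist R n./2 (k - d)) (good_dist R (k - d) H)
             > ((3 : R) ^+ d)^-1)
  <= 2 / ('C(n./2, k - d))%:R *
     ((3 : R) ^+ d + 2 * (3 : R) `^ (2 * d%:R +
        gamma_exp (k%:R / (n./2)%:R) (d%:R / (n./2)%:R) * (n./2)%:R)).
Proof.
move=> _ km d1 dk.
exact: (@main_gen R n./2 k d km d1 dk).
Qed.
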